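(* Let $\gamma\in(0,1)$ be a discount factor, $H\ge 1$ a planning horizon, $f$ the true (stochastic) transition map and $f_\phi$ an approximate transition map such that for every state–action pair $(x,u)$ the total variation distance between $f(\cdot\mid x,u)$ and $f_\phi(\cdot\mid x,u)$ is at most $\epsilon_f$. For a state $x_t$ and a control-distribution parameter $\tilde\eta_t$, let $$J(x_t,\tilde\eta_t)=\mathbb{E}_{\mathbf{u}_t\sim\pi_{\tilde\eta_t},\,\mathbf{x}_t\sim f_\phi}\big[C(\mathbf{x}_t,\mathbf{u}_t)\big],\qquad J_r(x_t,\tilde\eta_t)=\mathbb{E}_{\mathbf{u}_t\sim\pi_{\tilde\eta_t},\,\mathbf{x}_t\sim f}\big[C(\mathbf{x}_t,\mathbf{u}_t)\big],$$ where $C(\mathbf{x}_t,\mathbf{u}_t)=\sum_{h=0}^{H-1}\gamma^h c(x_{t,h},u_{t,h})+\gamma^H c_H(x_{t,H})$ with $c=-r$ and terminal cost $c_H(x)=-V_\zeta(x)$. Suppose $|c|\le c_{max}$ and $|V_\zeta|\le V_{max}$. Then $$J(x_t,\tilde\eta_t)-J_r(x_t,\tilde\eta_t)\le 2c_{max}\frac{(H-1)\gamma^{H+1}-H\gamma^H+\gamma}{(1-\gamma)^2}\,\epsilon_f+2\gamma^H V_{max}H\epsilon_f=:R_{f,H}.$$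
   Context: Setting: a Markov decision process with state set $\mathcal{X}\subset\mathbb{R}^n$, action set $\mathcal{U}\subset\mathbb{R}^m$, reward $r:\mathcal{X}\times\mathcal{U}\to\mathbb{R}$. An $H$-step rollout from $x_t$ consists of states $\mathbf{x}_t=(x_{t,0},\dots,x_{t,H})$ with $x_{t,0}=x_t$ and controls $\mathbf{u}_t=(u_{t,0},\dots,u_{t,H-1})$, where $\mathbf{u}_t$ is sampled from a control distribution $\pi_{\tilde\eta_t}$ (parameterized by $\tilde\eta_t=(\tilde\eta_{t,0},\dots,\tilde\eta_{t,H-1})$) and $x_{t,h+1}\sim f_\phi(x_{t,h},u_{t,h})$ (for $J$) or $x_{t,h+1}\sim f(x_{t,h},u_{t,h})$ (for $J_r$). $V_\zeta$ is a value-function estimate used as terminal reward. $c_{max}$ bounds the stage cost and $V_{max}$ bounds the value function. *)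

(* Defs.v *)
From HB Require Import structures.
From mathcomp Require Import all_boot all_order all_algebra.
From mathcomp Require Import all_classical all_reals all_analysis.
Set Implicit Arguments. Unset Strict Implicit. Unset Printing Implicit Defensive.
Import Order.TTheory GRing.Theory Num.Theory.
Local Open Scope classical_set_scope.
Local Open Scope ring_scope.
Local Open Scope ereal_scope.

Definition tv_dist (d : measure_display) (X : measurableType d) (R : realType)
  (P Q : set X -> \bar R) : \bar R :=
  ereal_sup [set `|P A - Q A| | A in [set A | measurable A]].

Definition stage_cost (X U : Type) (R : realType) (r : X -> U -> R) : X -> U -> R :=
  fun x u => (- r x u)%R.
Definition terminal_cost (X : Type) (R : realType) (V : X -> R) : X -> R :=
  fun x => (- V x)%R.

(* Expected discounted cost-to-go of a rollout under the fixed control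
   sequence u (u h = control at step h), for transition kernel k:
   rollout_ctg n h x = E[ sum_{j=h}^{h+n-1} gamma^j c(x_j,u_j) + gamma^(h+n) c_H(x_{h+n}) | x_h = x ],
   with x_{j+1} ~ k(x_j,u_j). *)
Fixpoint rollout_ctg (dx du : measure_display) (X : measurableType dx)
  (U : measurableType du) (R : realType) (k : R.-pker (X * U) ~> X)
  (c : X -> U -> R) (cH : X -> R) (gamma : R) (u : nat -> U)
  (n h : nat) (x : X) : \bar R :=
  match n with
  | 0%N => (gamma ^+ h * cH x)%:E
  | n'.+1 => (gamma ^+ h * c x (u h))%:E
             + \int[k (x, u h)]_y rollout_ctg k c cH gamma u n' h.+1 y
  end.

(* J(x_t, eta) = E_{u ~ pi_eta, x ~ k}[C(x,u)], where the control sequence is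
   drawn from pi (a probability on a space S of control sequences) and
   ctrl h s is the h-th control of the sequence s. *)
Definition expected_cost (dx du ds : measure_display) (X : measurableType dx)
  (U : measurableType du) (S : measurableType ds) (R : realType)
  (k : R.-pker (X * U) ~> X) (r : X -> U -> R) (V : X -> R) (gamma : R)
  (H : nat) (pi : probability S R) (ctrl : nat -> S -> U) (x0 : X) : \bar R :=
  \int[pi]_s rollout_ctg k (stage_cost r) (terminal_cost V) gamma
                 (fun h => ctrl h s) H 0 x0.

(* Main.v *)
Require Import Defs.
From HB Require Import structures.
From mathcomp Require Import all_boot all_order all_algebra.
From mathcomp Require Import all_classical all_reals all_analysis.
From mathcomp Require Import measurable_realfun.
From mathcomp Require Import ring lra.
Import Order.TTheory GRing.Theory Num.Theory.
Local Open Scope classical_set_scope.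
Local Open Scope ring_scope.
Set Implicit Arguments. Unset Strict Implicit. Unset Printing Implicit Defensive.

Lemma count_le (R : realType) (dl t : R) (N : nat) : 0 < dl ->
  \sum_(k < N) (if k.+1%:R * dl <= t then dl else 0) <= N%:R * dl.
Proof.
move=> d0; elim: N => [|N IH]; first by rewrite big_ord0 mul0r.
rewrite big_ord_recr /= -natr1 mulrDl mul1r lerD //.
by case: ifP => // _; exact: ltW.
Qed.

Lemma count_ub (R : realType) (dl t : R) (N : nat) : 0 < dl -> 0 <= t ->
  \sum_(k < N) (if k.+1%:R * dl <= t then dl else 0) <= t.
Proof.
move=> d0 t0; elim: N => [|N IH]; first by rewrite big_ord0.
rewrite big_ord_recr /=.
case: ifPn => H; last by rewrite addr0.
apply: le_trans H; rewrite -natr1 mulrDl mul1r lerD2r.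
exact: count_le.
Qed.

Lemma count_full (R : realType) (dl t : R) (N : nat) : 0 < dl ->
  N%:R * dl <= t -> \sum_(k < N) (if k.+1%:R * dl <= t then dl else 0) = N%:R * dl.
Proof.
move=> d0; elim: N => [|N IH]; first by rewrite big_ord0 mul0r.
move=> H; rewrite big_ord_recr /= H IH; last first.
  by apply: le_trans H; rewrite ler_pM2r // ler_nat.
by rewrite -natr1 mulrDl mul1r.
Qed.

Lemma count_lb (R : realType) (dl t : R) (N : nat) : 0 < dl ->
  t <= N%:R * dl -> t - dl <= \sum_(k < N) (if k.+1%:R * dl <= t then dl else 0).
Proof.
move=> d0; elim: N => [|N IH].
  by rewrite big_ord0 mul0r => H; rewrite subr_le0 (le_trans H) // ltW.
move=> H; have [H2|H2] := leP (N.+1%:R * dl) t.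
  rewrite count_full //.
  have -> : t = N.+1%:R * dl by apply/le_anti; rewrite H H2.
  by rewrite lerBlDr lerDl ltW.
rewrite big_ord_recr /= (lt_geF H2) addr0.
have [H3|H3] := leP t (N%:R * dl); first exact: IH.
rewrite count_full //; last exact: ltW.
by rewrite lerBlDr -{2}(mul1r dl) -mulrDl natr1 ltW.
Qed.

Lemma bint d (T : measurableType d) (R : realType) (mu : {measure set T -> \bar R})
  (g : T -> R) (B : R) : mu setT = 1%E -> measurable_fun setT g ->
  (forall x, `|g x| <= B) -> mu.-integrable setT (EFin \o g).
Proof.
move=> mu1 mg gB; apply/integrableP; split; first exact/measurable_EFinP.
have B0 : (0 <= `|B|) by [].
apply: (le_lt_trans (integral_le_bound (`|B|%:E) _ _ _ _)) => //.
- exact/measurable_EFinP.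
- apply: aeW => x _ /=; rewrite lee_fin; exact: le_trans (gB x) (ler_norm _).
- by rewrite mu1 mule1 ltry.
Qed.

Lemma Rint_cst1 d (T : measurableType d) (R : realType) (mu : {measure set T -> \bar R})
  (c : R) : mu setT = 1%E -> \int[mu]_x c = c.
Proof. by move=> mu1; rewrite Rintegral_cst // mu1 /= mulr1. Qed.

Lemma Rint_hN d (T : measurableType d) (R : realType) (m : {measure set T -> \bar R})
  (N : nat) (dl : R) (A : nat -> set T) : m setT = 1%E -> 0 <= dl ->
  (forall j, measurable (A j)) ->
  \int[m]_x (\sum_(j < N) dl * \1_(A j) x) = \sum_(j < N) dl * fine (m (A j)).
Proof.
move=> m1 d0 mA.
have fin j : m (A j) \is a fin_num.
  rewrite ge0_fin_numE //; apply: (le_lt_trans (y := 1%E)); last exact: ltry.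
  by rewrite -m1; apply: le_measure => //; rewrite inE.
rewrite /Rintegral.
transitivity (fine (\sum_(j < N) \int[m]_x (dl * \1_(A j) x)%:E)).
  congr fine; rewrite -ge0_integral_sum //.
  - by apply: eq_integral => x _; rewrite sumEFin.
  - move=> j; apply/measurable_EFinP; apply: measurable_funM => //.
  - by move=> j x Hx /=; rewrite lee_fin mulr_ge0.
rewrite (eq_bigr (fun j : 'I_N => (dl * fine (m (A j)))%:E)); first by rewrite sumEFin.
move=> j _; under eq_integral do rewrite EFinM.
rewrite ge0_integralZl //; last first.
  by apply/measurable_EFinP; exact: measurable_indic.
by rewrite integral_indic // setIT EFinM fineK.
Qed.

Lemma tv_int d (T : measurableType d) (R : realType) (mu nu : {measure set T -> \bar R})
  (g : T -> R) (M e : R) :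
  mu setT = 1%E -> nu setT = 1%E -> measurable_fun setT g -> (forall x, `|g x| <= M) ->
  (forall A, measurable A -> (`|mu A - nu A| <= e%:E)%E) ->
  \int[mu]_x g x - \int[nu]_x g x <= 2 * M * e.
Proof.
move=> mu1 nu1 mg gM tv.
have e0 : 0 <= e.
  by have := tv set0 measurable0; rewrite !measure0 sube0 abse0 lee_fin.
have [x0 _] : exists x : T, True.
  case: (pselect (exists x : T, True)) => // nT.
  have T0 : [set: T] = set0.
    by apply/seteqP; split => x // _; apply: nT; exists x.
  by move: mu1; rewrite T0 measure0 => /(congr1 fine) /= /eqP; rewrite eq_sym oner_eq0.
have M0 : 0 <= M := le_trans (normr_ge0 _) (gM x0).
have [Meq0|Mgt0] := eqVneq M 0.
  have g0 x : g x = 0 by apply/normr0_eq0/le_anti; rewrite normr_ge0 andbT -Meq0 gM.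
  under eq_Rintegral do rewrite g0.
  under [X in _ - X]eq_Rintegral do rewrite g0.
  by rewrite !Rint_cst1 // subrr Meq0 mulr0 mul0r.
have Mp : 0 < M by rewrite lt_neqAle eq_sym Mgt0 M0.
set h := fun x => g x + M.
have mh : measurable_fun setT h by apply: measurable_funD.
have hb x : 0 <= h x <= 2 * M.
  by have := gM x; rewrite ler_norml /h => /andP[H1 H2]; apply/andP; split; lra.
have Rh (m : {measure set T -> \bar R}) : m setT = 1%E ->
    \int[m]_x g x = \int[m]_x h x - M.
  move=> m1; rewrite /h RintegralD //; last 2 first.
  - exact: bint m1 mg gM.
  - by apply: (bint (B := M)) m1 (measurable_cst _) _ => x; rewrite ger0_norm.
  by rewrite Rint_cst1 // addrK.
rewrite (Rh mu) // (Rh nu) // opprB addrA subrK.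
set L := 2 * M.
have L0 : 0 < L by rewrite /L; lra.
apply/ler_addgt0Pr => eps eps0.
have [k Hk] := ltr_add_invr (divr_gt0 eps0 L0).
rewrite add0r in Hk.
set N := k.+1.
set dl := L / N%:R.
have N0 : 0 < (N%:R : R) by rewrite ltr0n.
have dl0 : 0 < dl by rewrite /dl divr_gt0.
have dleps : dl < eps.
  rewrite /dl -(ltr_pM2l L0) in Hk.
  by rewrite mulrCA divff ?mulr1 in Hk; rewrite ?gt_eqF.
have NdlL : N%:R * dl = L by rewrite /dl mulrC -mulrA mulVf ?mulr1 // gt_eqF.
pose A (j : nat) := [set x | j.+1%:R * dl <= h x].
have mA j : measurable (A j).
  have -> : A j = h @^-1` `[j.+1%:R * dl, +oo[.
    by apply/seteqP; split => x /=; rewrite in_itv /= andbT.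
  by rewrite -[X in measurable X]setTI; apply: mh => //; exact: measurable_itv.
pose hN x := \sum_(j < N) dl * \1_(A j) x.
have hNe x : hN x = \sum_(j < N) (if j.+1%:R * dl <= h x then dl else 0).
  apply: eq_bigr => j _; rewrite indicE.
  case: ifPn => H.
    by rewrite mem_set ?mulr1.
  by rewrite memNset ?mulr0 //; apply/negP.
have hN1 x : hN x <= h x.
  by rewrite hNe; apply: count_ub => //; case/andP: (hb x).
have hN2 x : h x - dl <= hN x.
  by rewrite hNe; apply: count_lb => //; rewrite NdlL; case/andP: (hb x).
have mhN : measurable_fun setT hN.
  apply: measurable_sum => j; apply: measurable_funM => //.
have hNb x : `|hN x| <= L + dl.
  have := hN1 x; have := hN2 x; have := hb x; case/andP => H1 H2 H3 H4.
  by rewrite /L ler_norml; apply/andP; split; lra.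
have hB x : `|h x| <= L by case/andP: (hb x) => H1 H2; rewrite ger0_norm.
have I1 (m : {measure set T -> \bar R}) : m setT = 1%E ->
    \int[m]_x h x <= \int[m]_x hN x + dl.
  move=> m1; rewrite -[X in _ <= _ + X](Rint_cst1 dl m1) -RintegralD //; last 2 first.
  - exact: bint m1 mhN hNb.
  - by apply: (bint (B := dl)) m1 (measurable_cst _) _ => x; rewrite ger0_norm // ltW.
  apply: le_Rintegral => //.
  - exact: bint m1 mh hB.
  - apply: (bint (B := L + dl + dl)) m1 _ _.
      exact: measurable_funD.
    move=> x; apply: le_trans (ler_normD _ _) _; apply: lerD => //.
    by rewrite ger0_norm // ltW.
  by move=> x _; have := hN2 x; lra.
have I2 (m : {measure set T -> \bar R}) : m setT = 1%E ->
    \int[m]_x hN x <= \int[m]_x h x.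
  move=> m1; apply: le_Rintegral => //.
  - exact: bint m1 mhN hNb.
  - exact: bint m1 mh hB.
have I3 : \int[mu]_x hN x - \int[nu]_x hN x <= L * e.
  rewrite /hN !Rint_hN //; try exact: ltW.
  rewrite -sumrB.
  apply: (le_trans (y := \sum_(j < N) dl * e)).
    apply: ler_sum => j _; rewrite -mulrBr ler_wpM2l //; first exact: ltW.
    have fin (m : {measure set T -> \bar R}) : m setT = 1%E -> m (A j) \is a fin_num.
      move=> m1; rewrite ge0_fin_numE //; apply: (le_lt_trans (y := 1%E)); last exact: ltry.
      by rewrite -m1; apply: le_measure => //; rewrite inE.
    have := tv _ (mA j); rewrite -(fineK (fin _ mu1)) -(fineK (fin _ nu1)).
    rewrite -EFinB /= lee_fin => H; exact: le_trans (ler_norm _) H.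
  rewrite sumr_const card_ord -mulr_natl mulrA NdlL //.
have := I1 mu mu1; have := I2 nu nu1; move: I3 dleps; rewrite /L => H1 H2 H3 H4; lra.
Qed.
Definition kctl (dx du ds : measure_display) (X : measurableType dx)
  (U : measurableType du) (S : measurableType ds) (R : realType)
  (k : R.-pker (X * U) ~> X) (c : S -> U) (mc : measurable_fun setT c) :
  S * X -> {measure set X -> \bar R} := fun z => k (z.2, c z.1).

Section kctl_inst.
Context (dx du ds : measure_display) (X : measurableType dx)
  (U : measurableType du) (S : measurableType ds) (R : realType)
  (k : R.-pker (X * U) ~> X) (c : S -> U) (mc : measurable_fun setT c).

Let mk A : measurable A -> measurable_fun [set: S * X] (fun z => kctl k mc z A).
Proof.
move=> mA.
have -> : (fun z => kctl k mc z A) = (k ^~ A) \o (fun z : S * X => (z.2, c z.1)) by [].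
apply: measurableT_comp; first exact: measurable_kernel.
apply: measurable_fun_pair; first exact: measurable_snd.
exact: measurableT_comp.
Qed.

HB.instance Definition _ := isKernel.Build _ _ _ _ _ (kctl k mc) mk.

Let uub : measure_fam_uub (kctl k mc).
Proof.
exists 2%R => z; rewrite /kctl prob_kernel lte_fin; lra.
Qed.

HB.instance Definition _ := Kernel_isFinite.Build _ _ _ _ _ (kctl k mc) uub.
End kctl_inst.

Fixpoint grl (dx du ds : measure_display) (X : measurableType dx)
  (U : measurableType du) (S : measurableType ds) (R : realType)
  (k : R.-pker (X * U) ~> X) (c : X -> U -> R) (cH : X -> R) (gamma : R)
  (ctrl : nat -> S -> U) (n h : nat) (z : S * X) {struct n} : R :=
  match n with
  | 0%N => gamma ^+ h * cH z.2
  | n'.+1 => gamma ^+ h * c z.2 (ctrl h z.1) +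
      fine (\int[k (z.2, ctrl h z.1)]_y (grl k c cH gamma ctrl n' h.+1 (z.1, y))%:E)
  end.

Definition Bd (R : realType) (gamma cmax Vmax : R) (n h : nat) : R :=
  gamma ^+ h * (cmax * \sum_(l < n) gamma ^+ l + gamma ^+ n * Vmax).

Lemma grl_prop (dx du ds : measure_display) (X : measurableType dx)
  (U : measurableType du) (S : measurableType ds) (R : realType)
  (k : R.-pker (X * U) ~> X) (c : X -> U -> R) (cH : X -> R) (gamma : R)
  (ctrl : nat -> S -> U) (cmax Vmax : R) :
  0 <= gamma -> measurable_fun setT (fun xu : X * U => c xu.1 xu.2) ->
  measurable_fun setT cH -> (forall h, measurable_fun setT (ctrl h)) ->
  (forall x u, `|c x u| <= cmax) -> (forall x, `|cH x| <= Vmax) ->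
  forall n h, [/\ measurable_fun setT (grl k c cH gamma ctrl n h),
    (forall z, `|grl k c cH gamma ctrl n h z| <= Bd gamma cmax Vmax n h) &
    (forall s x, rollout_ctg k c cH gamma (fun j => ctrl j s) n h x =
                 (grl k c cH gamma ctrl n h (s, x))%:E)].
Proof.
move=> g0 mc mcH mctrl cB cHB.
elim => [|n IH] h.
  split => //.
  - apply: measurable_funM => //; exact: measurableT_comp.
  - move=> z /=; rewrite /Bd big_ord0 mulr0 add0r expr0 mul1r normrM.
    by rewrite ger0_norm ?exprn_ge0 // ler_wpM2l ?exprn_ge0.
have [IHm IHb IHe] := IH h.+1.
set G := grl k c cH gamma ctrl n h.+1.
have mGs s : measurable_fun setT (fun y => G (s, y)).
  apply: measurableT_comp IHm _; apply: measurable_fun_pair => //.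
have iG s x u : (k (x, u)).-integrable setT (EFin \o (fun y => G (s, y))).
  by apply: (bint (B := Bd gamma cmax Vmax n h.+1)) => //; exact: prob_kernel.
split.
- apply: measurable_funD.
    apply: measurable_funM => //.
    have -> : (fun z : S * X => c z.2 (ctrl h z.1)) =
      (fun xu : X * U => c xu.1 xu.2) \o (fun z : S * X => (z.2, ctrl h z.1)) by [].
    apply: measurableT_comp mc _; apply: measurable_fun_pair => //.
    exact: measurableT_comp (mctrl h) _.
  apply: measurableT_comp => //.
  pose K := fun p : (S * X) * X => (G (p.1.1, p.2))%:E.
  have mK : measurable_fun setT K.
    apply/measurable_EFinP; apply: measurableT_comp IHm _.
    apply: measurable_fun_pair => //.
    exact: measurableT_comp measurable_fst measurable_fst.
  rewrite (_ : (fun z => _) = fun z =>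
     (\int[kctl k (mctrl h) z]_y (K^\+ (z, y)) - \int[kctl k (mctrl h) z]_y (K^\- (z, y)))%E); last first.
    apply/funext => z. have E2 : kctl k (mctrl h) z = k (z.2, ctrl h z.1) by []. rewrite E2.
    have E3 : ((fun y => (G (z.1, y))%:E)^\+ = fun y => K^\+ (z, y))%E by apply/funext => y; rewrite !funeposE.
    have E4 : ((fun y => (G (z.1, y))%:E)^\- = fun y => K^\- (z, y))%E by apply/funext => y; rewrite !funenegE.
    by rewrite [in LHS]integralE E3 E4.
  apply: emeasurable_funB.
    apply: (measurable_fun_integral_finite_kernel _ (kctl k (mctrl h))).
      by move=> p; exact: funepos_ge0.
    exact: measurable_funepos.
  apply: (measurable_fun_integral_finite_kernel _ (kctl k (mctrl h))).
    by move=> p; exact: funeneg_ge0.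
  exact: measurable_funeneg.
- move=> z /=.
  apply: le_trans (ler_normD _ _) _.
  rewrite /Bd big_ord_recl /= expr0 exprS.
  have -> : gamma ^+ h * (cmax * (1 + \sum_(i < n) gamma ^+ (bump 0 i)) +
       gamma * gamma ^+ n * Vmax) =
     gamma ^+ h * cmax + gamma ^+ h.+1 * (cmax * \sum_(i < n) gamma ^+ i + gamma ^+ n * Vmax).
    rewrite /bump /=.
    under eq_bigr do rewrite add1n exprS.
    rewrite -mulr_sumr exprS; ring.
  apply: lerD.
    by rewrite normrM ger0_norm ?exprn_ge0 // ler_wpM2l ?exprn_ge0.
  have k1 := @prob_kernel _ _ _ _ _ k (z.2, ctrl h z.1).
  apply: le_trans (le_normr_Rintegral _ _) _ => //.
  apply: le_trans (le_Rintegral (f2 := fun=> Bd gamma cmax Vmax n h.+1) _ _ _ _) _ => //.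
  + apply: (bint (B := Bd gamma cmax Vmax n h.+1)) => //.
      exact: measurableT_comp.
    by move=> y; rewrite normr_id.
  + by apply: (bint (B := `|Bd gamma cmax Vmax n h.+1|)) => //.
  + by rewrite Rint_cst1.
- move=> s x /=.
  under eq_integral do rewrite IHe.
  rewrite EFinD fineK //; apply: integrable_fin_num => //; exact: (iG s x (ctrl h s)).
Qed.

Definition Fb (R : realType) (gamma cmax Vmax e : R) (n : nat) : R :=
  2 * e * (cmax * \sum_(j < n) j%:R * gamma ^+ j + n%:R * gamma ^+ n * Vmax).

Lemma sumj (R : realType) (g : R) n :
  \sum_(j < n.+1) j%:R * g ^+ j =
  g * (\sum_(j < n) j%:R * g ^+ j + \sum_(j < n) g ^+ j).
Proof.
rewrite big_ord_recl /= mul0r add0r mulrDr !mulr_sumr -big_split.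
apply: eq_bigr => j _ /=; rewrite /bump /= add1n -natr1 exprS; ring.
Qed.

Lemma sumj_closed (R : realType) (g : R) n :
  (\sum_(j < n) j%:R * g ^+ j) * (1 - g) ^+ 2 =
  (n%:R - 1) * g ^+ n.+1 - n%:R * g ^+ n + g.
Proof.
elim: n => [|n IH]; first by rewrite big_ord0 mul0r expr0 expr1; ring.
rewrite big_ord_recr /= mulrDl IH -natr1 !exprS; ring.
Qed.

Lemma grl_diff (dx du ds : measure_display) (X : measurableType dx)
  (U : measurableType du) (S : measurableType ds) (R : realType)
  (kp kf : R.-pker (X * U) ~> X) (c : X -> U -> R) (cH : X -> R) (gamma : R)
  (ctrl : nat -> S -> U) (cmax Vmax e : R) :
  0 <= gamma -> measurable_fun setT (fun xu : X * U => c xu.1 xu.2) ->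
  measurable_fun setT cH -> (forall h, measurable_fun setT (ctrl h)) ->
  (forall x u, `|c x u| <= cmax) -> (forall x, `|cH x| <= Vmax) ->
  (forall x u A, measurable A -> (`|kp (x, u) A - kf (x, u) A| <= e%:E)%E) ->
  forall n h z, grl kp c cH gamma ctrl n h z - grl kf c cH gamma ctrl n h z
                <= gamma ^+ h * Fb gamma cmax Vmax e n.
Proof.
move=> g0 mc mcH mctrl cB cHB tv.
elim => [|n IH] h z.
  by rewrite subrr /Fb big_ord0 !(mulr0, mul0r, addr0).
have [mp bp ep] := @grl_prop _ _ _ _ _ _ _ kp c cH gamma ctrl cmax Vmax g0 mc mcH mctrl cB cHB n h.+1.
have [mf bf ef] := @grl_prop _ _ _ _ _ _ _ kf c cH gamma ctrl cmax Vmax g0 mc mcH mctrl cB cHB n h.+1.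
set gp := grl kp c cH gamma ctrl n h.+1.
set gf := grl kf c cH gamma ctrl n h.+1.
set P := kp (z.2, ctrl h z.1).
set Q := kf (z.2, ctrl h z.1).
have P1 : P setT = 1%E by exact: prob_kernel.
have Q1 : Q setT = 1%E by exact: prob_kernel.
have mgs (g : S * X -> R) : measurable_fun setT g -> measurable_fun setT (fun y => g (z.1, y)).
  move=> mg; apply: measurableT_comp mg _; exact: measurable_fun_pair.
rewrite /=.
rewrite -/P -/Q.
have -> : fine (\int[P]_y (gp (z.1, y))%:E) = \int[P]_y gp (z.1, y) by [].
have -> : fine (\int[Q]_y (gf (z.1, y))%:E) = \int[Q]_y gf (z.1, y) by [].
have ip : P.-integrable setT (EFin \o (fun y => gp (z.1, y))).
  by apply: (bint (B := Bd gamma cmax Vmax n h.+1)) => //; exact: mgs.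
have if' : P.-integrable setT (EFin \o (fun y => gf (z.1, y))).
  by apply: (bint (B := Bd gamma cmax Vmax n h.+1)) => //; exact: mgs.
have T1 : \int[P]_y gp (z.1, y) - \int[P]_y gf (z.1, y) <= gamma ^+ h.+1 * Fb gamma cmax Vmax e n.
  rewrite -RintegralB //.
  have iD : P.-integrable setT (EFin \o (fun y => gp (z.1, y) - gf (z.1, y))).
    apply: (bint (B := 2 * Bd gamma cmax Vmax n h.+1)) => //.
      by apply: measurable_funB; exact: mgs.
    move=> y; apply: le_trans (ler_normB _ _) _.
    by rewrite mulr2n mulrDl mul1r lerD.
  have iC : P.-integrable setT (EFin \o (fun=> gamma ^+ h.+1 * Fb gamma cmax Vmax e n)).
    by apply: (bint (B := `|gamma ^+ h.+1 * Fb gamma cmax Vmax e n|)) => //.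
  apply: le_trans (@le_Rintegral _ _ _ P setT _ _ measurableT iD iC _) _.
    by move=> y _; exact: IH.
  by rewrite Rint_cst1.
have T2 : \int[P]_y gf (z.1, y) - \int[Q]_y gf (z.1, y) <= 2 * Bd gamma cmax Vmax n h.+1 * e.
  apply: tv_int => //; first exact: mgs.
  by move=> A mA; exact: tv.
have -> : gamma ^+ h * Fb gamma cmax Vmax e n.+1 =
    gamma ^+ h.+1 * Fb gamma cmax Vmax e n + 2 * Bd gamma cmax Vmax n h.+1 * e.
  rewrite /Fb /Bd sumj -natr1 !exprS; ring.
have := T1; have := T2; lra.
Qed.
Theorem lemma1 (dx du ds : measure_display) (X : measurableType dx)
  (U : measurableType du) (S : measurableType ds) (R : realType)
  (gamma : R) (H : nat) (f fphi : R.-pker (X * U) ~> X) (eps_f : R)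
  (r : X -> U -> R) (Vzeta : X -> R) (cmax Vmax : R)
  (pi : probability S R) (ctrl : nat -> S -> U) (xt : X) :
  0 < gamma < 1 -> (1 <= H)%N ->
  (forall x u, (tv_dist (f (x, u)) (fphi (x, u)) <= eps_f%:E)%E) ->
  measurable_fun setT (fun xu : X * U => r xu.1 xu.2) ->
  measurable_fun setT Vzeta ->
  (forall h, measurable_fun setT (ctrl h)) ->
  (forall x u, `|stage_cost r x u| <= cmax) ->
  (forall x, `|Vzeta x| <= Vmax) ->
  (expected_cost fphi r Vzeta gamma H pi ctrl xt
   - expected_cost f r Vzeta gamma H pi ctrl xt
   <= (2 * cmax * (((H%:R - 1) * gamma ^+ H.+1 - H%:R * gamma ^+ H + gamma)
                   / (1 - gamma) ^+ 2) * eps_f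
       + 2 * gamma ^+ H * Vmax * H%:R * eps_f)%:E)%E.
Proof.
move=> /andP[g0 g1] H1 tv mr mV mctrl cB VB.
set c := stage_cost r.
set cH := terminal_cost Vzeta.
have mc : measurable_fun setT (fun xu : X * U => c xu.1 xu.2).
  exact: measurable_funN.
have mcH : measurable_fun setT cH by exact: measurable_funN.
have cHB x : `|cH x| <= Vmax by rewrite /cH /terminal_cost normrN.
have g0' : 0 <= gamma := ltW g0.
have tv' x u A : measurable A -> (`|fphi (x, u) A - f (x, u) A| <= eps_f%:E)%E.
  move=> mA.
  have fin (k : R.-pker (X * U) ~> X) : k (x, u) A \is a fin_num.
    rewrite ge0_fin_numE //; apply: (le_lt_trans (y := 1%E)); last exact: ltry.
    by rewrite -(@prob_kernel _ _ _ _ _ k (x, u)); apply: le_measure => //; rewrite inE.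
  have Hs : (`|f (x, u) A - fphi (x, u) A| <= tv_dist (f (x, u)) (fphi (x, u)))%E.
    by apply: ereal_sup_ubound; exists A.
  have Ht := le_trans Hs (tv x u).
  move: Ht; rewrite -(fineK (fin fphi)) -(fineK (fin f)) -!EFinB !abse_EFin !lee_fin.
  by rewrite distrC.
have pi1 : pi setT = 1%E := @probability_setT _ _ _ pi.
have ms (k : R.-pker (X * U) ~> X) :
    measurable_fun setT (fun s => grl k c cH gamma ctrl H 0 (s, xt)).
  have [m _ _] := @grl_prop _ _ _ _ _ _ _ k c cH gamma ctrl cmax Vmax g0' mc mcH mctrl cB cHB H 0.
  apply: measurableT_comp m _; exact: measurable_fun_pair.
have ik (k : R.-pker (X * U) ~> X) :
    pi.-integrable setT (EFin \o (fun s => grl k c cH gamma ctrl H 0 (s, xt))).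
  have [_ b _] := @grl_prop _ _ _ _ _ _ _ k c cH gamma ctrl cmax Vmax g0' mc mcH mctrl cB cHB H 0.
  by apply: (bint (B := Bd gamma cmax Vmax H 0)) => //; exact: ms.
have Ep (k : R.-pker (X * U) ~> X) : expected_cost k r Vzeta gamma H pi ctrl xt =
    (\int[pi]_s (grl k c cH gamma ctrl H 0 (s, xt))%:E)%E.
  rewrite /expected_cost; apply: eq_integral => s _.
  have [_ _ e] := @grl_prop _ _ _ _ _ _ _ k c cH gamma ctrl cmax Vmax g0' mc mcH mctrl cB cHB H 0.
  exact: e.
rewrite !Ep.
have fp (k : R.-pker (X * U) ~> X) :
    (\int[pi]_s (grl k c cH gamma ctrl H 0 (s, xt))%:E)%E \is a fin_num.
  exact: (integrable_fin_num _ (ik k)).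
rewrite -(fineK (fp fphi)) -(fineK (fp f)).
rewrite -EFinB lee_fin.
suff HH : \int[pi]_s grl fphi c cH gamma ctrl H 0 (s, xt) -
          \int[pi]_s grl f c cH gamma ctrl H 0 (s, xt) <=
  2 * cmax * (((H%:R - 1) * gamma ^+ H.+1 - H%:R * gamma ^+ H + gamma)
                   / (1 - gamma) ^+ 2) * eps_f
       + 2 * gamma ^+ H * Vmax * H%:R * eps_f by exact: HH.
rewrite -RintegralB //.
have iC : pi.-integrable setT (EFin \o (fun=> Fb gamma cmax Vmax eps_f H)).
  by apply: (bint (B := `|Fb gamma cmax Vmax eps_f H|)) => //.
have iD : pi.-integrable setT (EFin \o (fun s => grl fphi c cH gamma ctrl H 0 (s, xt) -
    grl f c cH gamma ctrl H 0 (s, xt))).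
  have [_ b1 _] := @grl_prop _ _ _ _ _ _ _ fphi c cH gamma ctrl cmax Vmax g0' mc mcH mctrl cB cHB H 0.
  have [_ b2 _] := @grl_prop _ _ _ _ _ _ _ f c cH gamma ctrl cmax Vmax g0' mc mcH mctrl cB cHB H 0.
  apply: (bint (B := 2 * Bd gamma cmax Vmax H 0)) => //.
    by apply: measurable_funB; exact: ms.
  move=> y; apply: le_trans (ler_normB _ _) _.
  by rewrite mulr2n mulrDl mul1r lerD.
apply: le_trans (@le_Rintegral _ _ _ pi setT _ _ measurableT iD iC _) _.
  move=> s _.
  have := @grl_diff _ _ _ _ _ _ _ fphi f c cH gamma ctrl cmax Vmax eps_f g0' mc mcH mctrl cB cHB tv' H 0 (s, xt).
  by rewrite expr0 mul1r.
rewrite Rint_cst1 //.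
have g1' : (1 - gamma) ^+ 2 != 0 by rewrite expf_neq0 // subr_eq0 eq_sym lt_eqF.
rewrite /Fb -(sumj_closed gamma H) mulfK //.
by rewrite le_eqVlt; apply/orP; left; apply/eqP; ring.
Qed.
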